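(* Let $H$ be a graph with a cut edge $e=(u,w)$. Then for every pattern $\mathbf{s}$ with $N(H)\mathbf{s}=\mathbf{1}$, either $\mathbf{s}(u)=0$ or $\mathbf{s}(w)=0$.
   Context: For a finite simple graph $H$ with vertex set $\{v_1,\dots,v_n\}$, the closed adjacency matrix $N(H)$ is the $n\times n$ matrix over $\mathbb{Z}_2$ whose $(i,j)$ entry is $1$ iff $i=j$ or $v_i$ is adjacent to $v_j$; patterns are vectors in $\mathbb{Z}_2^{V(H)}$ and $\mathbf{1}$ is the all-ones vector. A cut edge is an edge whose deletion increases the number of connected components. *)

(* Defs.v *)
From mathcomp Require Import all_boot all_order all_algebra.
Set Implicit Arguments. Unset Strict Implicit. Unset Printing Implicit Defensive.
Import GRing.Theory.
Local Open Scope ring_scope.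

Definition simple_graph (n : nat) (g : rel 'I_n) : Prop :=
  symmetric g /\ irreflexive g.

Definition closed_adj (n : nat) (g : rel 'I_n) : 'M['F_2]_n :=
  \matrix_(i, j) ((i == j) || g i j)%:R.

Definition component (n : nat) (g : rel 'I_n) (x : 'I_n) : {set 'I_n} :=
  [set y | connect g x y].
Definition num_components (n : nat) (g : rel 'I_n) : nat :=
  #|[set component g x | x : 'I_n]|.

Definition delete_edge (n : nat) (g : rel 'I_n) (u w : 'I_n) : rel 'I_n :=
  fun x y => g x y && ~~ (((x == u) && (y == w)) || ((x == w) && (y == u))).

Definition cut_edge (n : nat) (g : rel 'I_n) (u w : 'I_n) : Prop :=
  g u w /\ (num_components g < num_components (delete_edge g u w))%N.

(* Main.v *)
Require Import Defs.
From mathcomp Require Import all_boot all_order all_algebra.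
From mathcomp Require Import ring.
Local Open Scope ring_scope.
Import GRing.Theory.

Lemma F2_addxx (x : 'F_2) : x + x = 0.
Proof. by case: x => [[|[|]]] // ?; apply: val_inj. Qed.

Lemma F2_mulxx (x : 'F_2) : x * x = x.
Proof. by case: x => [[|[|]]] // ?; apply: val_inj. Qed.

Lemma sym_double_sum (n : nat) (A : {set 'I_n}) (f : 'I_n -> 'I_n -> 'F_2) :
  (forall x y, f x y = f y x) ->
  \sum_(x in A) \sum_(y in A) f x y = \sum_(x in A) f x x.
Proof.
move=> fsym.
have E : forall x, x \in A -> \sum_(y in A) f x y =
    f x x + (\sum_(y in A | (y < x)%N) f x y + \sum_(y in A | (x < y)%N) f x y).
  move=> x xA; rewrite (bigD1 x) //=; congr (_ + _).
  rewrite (bigID (fun y : 'I_n => (y < x)%N)) /=; congr (_ + _); apply: eq_bigl => y.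
    by case: (y \in A) => //=; rewrite -(inj_eq val_inj) /=; case: ltngtP.
  by case: (y \in A) => //=; rewrite -(inj_eq val_inj) /=; case: ltngtP.
rewrite (eq_bigr _ E) big_split /= big_split /=.
rewrite [X in _ + (_ + X)](exchange_big_dep (fun y : 'I_n => y \in A)) /=; last first.
  by move=> i j _ /andP[].
rewrite [X in _ + (_ + X)](eq_bigr (fun j : 'I_n => \sum_(i in A | (i < j)%N) f j i)).
  by rewrite F2_addxx addr0.
move=> j jA; apply: eq_big => [i|i _]; last exact: fsym.
by rewrite jA.
Qed.

Theorem lemma3p1 (n : nat) (g : rel 'I_n) (u w : 'I_n)
  (Hg : simple_graph g) (Hcut : cut_edge g u w)
  (s : 'cV['F_2]_n) (Hs : closed_adj g *m s = const_mx 1) :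
  s u 0 = 0 \/ s w 0 = 0.
Proof.
case: Hg => gsym girr; case: Hcut => guw Hlt.
set g' := delete_edge g u w.
have g'g : forall x y, g' x y -> g x y by move=> x y /andP[].
have g'sym : symmetric g'.
  move=> x y; rewrite /g' /delete_edge gsym; congr (_ && _).
  by case: (x == u); case: (y == w); case: (x == w); case: (y == u).
have nuw : ~~ connect g' u w.
  apply/negP => cuw; move: Hlt; rewrite /num_components.
  have cwu : connect g' w u by rewrite (sym_connect_sym g'sym).
  suff Hc : component g =1 component g'.
    by rewrite (eq_imset _ Hc) ltnn.
  move=> x; apply/setP => y; rewrite !inE; apply/idP/idP.
    apply: connect_sub => a b gab.
    case Hab: (g' a b); first exact: connect1.
    move: Hab; rewrite /g' /delete_edge gab /= => /negbFE.
    by case/orP => /andP[/eqP -> /eqP ->].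
  by apply: connect_sub => a b /g'g; apply: connect1.
set C := [set x | connect g' u x].
have uC : u \in C by rewrite inE connect0.
have wC : w \notin C by rewrite inE.
have edgeC : forall x y, x \in C -> y \notin C -> g x y -> (x == u) && (y == w).
  move=> x y xC yC gxy.
  case Hg': (g' x y).
    by move: yC; rewrite !inE (connect_trans _ (connect1 Hg')) //; rewrite inE in xC.
  move: Hg'; rewrite /g' /delete_edge gxy /= => /negbFE /orP[] // /andP[/eqP xw _].
  by move: xC wC; rewrite xw => ->.
set t := fun x => s x 0.
set N := closed_adj g.
have Nsym : forall x y, N x y = N y x.
  by move=> x y; rewrite /N !mxE eq_sym gsym.
have row1 : forall x, \sum_y N x y * t y = 1.
  by move=> x; have := congr1 (fun M : 'M['F_2]_(n,1) => M x 0) Hs; rewrite !mxE.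
have Nout : forall x y, x \in C -> y \notin C -> N x y * t y =
    if (x == u) && (y == w) then t w else 0.
  move=> x y xC yC; rewrite /N mxE.
  have xy : x != y by apply: contraNneq yC => <-.
  rewrite (negbTE xy) /=.
  case gxy: (g x y).
    by case/andP: (edgeC x y xC yC gxy) => /eqP -> /eqP ->; rewrite !eqxx mul1r.
  case: ifP => [/andP[/eqP xu /eqP yw]|_]; last by rewrite mul0r.
  by rewrite xu yw guw in gxy.
pose S := \sum_(x in C) t x * (\sum_y N x y * t y).
have S1 : S = \sum_(x in C) t x by apply: eq_bigr => x _; rewrite row1 mulr1.
have S2 : S = \sum_(x in C) t x + t u * t w.
  rewrite /S.
  have E : forall x, x \in C -> t x * (\sum_y N x y * t y) =
     \sum_(y in C) t x * N x y * t y + (if x == u then t u * t w else 0).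
    move=> x xC; rewrite (bigID (fun y => y \in C)) /= mulrDr; congr (_ + _).
      by rewrite big_distrr /=; apply: eq_bigr => y _; rewrite mulrA.
    rewrite (eq_bigr (fun y => if (x == u) && (y == w) then t w else 0)); last first.
      by move=> y yC; rewrite Nout.
    case: eqP => [->|_]; last by rewrite big1 ?mulr0.
    rewrite (bigD1 w) //= eqxx big1 ?addr0 //.
    by move=> y /andP[_ /negbTE ->].
  rewrite (eq_bigr _ E) big_split /=; congr (_ + _).
    rewrite (@sym_double_sum n C (fun x y : 'I_n => t x * N x y * t y)).
      apply: eq_bigr => x _; rewrite /N mxE eqxx /= mulr1 F2_mulxx //.
    by move=> x y; rewrite Nsym; ring.
  by rewrite (bigD1 u) //= eqxx big1 ?addr0 // => x /andP[_ /negbTE ->].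
have : t u * t w = 0.
  by apply: (addrI (\sum_(x in C) t x)); rewrite -S2 -S1 addr0.
by move/eqP; rewrite mulf_eq0 => /orP[] /eqP; [left|right].
Qed.
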